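(* Consider formal expressions built from two variables $\pi_i,\pi_j$ and real constants using only the binary operators $+,-,\times,\div$ (with parentheses allowed freely), and let the operator count of an expression be the number of occurrences of these operators in it. Each expression defines a function $f(\pi_i,\pi_j)$ wherever it is defined. Say that $f$ is admissible if: (1) $f$ is defined on all of $\mathbb{R}^+\times\mathbb{R}^+$ (where $\mathbb{R}^+=(0,\infty)$) and takes values in $[0,1]$; (2) $f(\pi_i,\pi_j)=\tfrac12$ whenever $\pi_i=\pi_j$; (3) $\lim_{\pi_i\to 0} f(\pi_i,\pi_j)=0$ for each fixed $\pi_j$; (4) $\lim_{\pi_j\to 0} f(\pi_i,\pi_j)=1$ for each fixed $\pi_i$; (5) $\lim_{\pi_i\to \infty} f(\pi_i,\pi_j)=1$ for each fixed $\pi_j$; (6) $\lim_{\pi_j\to \infty} f(\pi_i,\pi_j)=0$ for each fixed $\pi_i$. Then no expression with operator count $0$ or $1$ defines an admissible function, and every expression with operator count exactly $2$ that defines an admissible function defines $f(\pi_i,\pi_j)=\dfrac{\pi_i}{\pi_i+\pi_j}$ (which is admissible). Thus $\pi_i/(\pi_i+\pi_j)$ is the unique admissible function of minimal operator count.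
   Context: Here $\pi_i,\pi_j>0$ are strength parameters of items $i$ and $j$, and $f(\pi_i,\pi_j)$ is intended as the probability that $i$ is preferred to $j$ in a pairwise comparison. Constants may appear in place of variables at no cost in the operator count; parentheses do not count as operators. *)

(* Defs.v *)
From Stdlib Require Import Reals.
From Coquelicot Require Import Coquelicot.
Open Scope R_scope.

Inductive bexpr : Type :=
  | VarI : bexpr
  | VarJ : bexpr
  | Const : R -> bexpr
  | Add : bexpr -> bexpr -> bexpr
  | Sub : bexpr -> bexpr -> bexpr
  | Mul : bexpr -> bexpr -> bexpr
  | Dvd : bexpr -> bexpr -> bexpr.

Fixpoint opcount (e : bexpr) : nat :=
  match e with
  | VarI | VarJ | Const _ => 0
  | Add a b | Sub a b | Mul a b | Dvd a b => S (opcount a + opcount b)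
  end.

Fixpoint eval (e : bexpr) (x y : R) : option R :=
  match e with
  | VarI => Some x
  | VarJ => Some y
  | Const c => Some c
  | Add a b => match eval a x y, eval b x y with
               | Some u, Some v => Some (u + v) | _, _ => None end
  | Sub a b => match eval a x y, eval b x y with
               | Some u, Some v => Some (u - v) | _, _ => None end
  | Mul a b => match eval a x y, eval b x y with
               | Some u, Some v => Some (u * v) | _, _ => None end
  | Dvd a b => match eval a x y, eval b x y with
               | Some u, Some v => if Req_EM_T v 0 then None else Some (u / v)
               | _, _ => None end
  end.

(** Total version used for limits; only ever inspected on the positive
    quadrant, where admissibility forces the expression to be defined. *)
Definition evalR (e : bexpr) (x y : R) : R :=
  match eval e x y with Some v => v | None => 0 end.

Definition admissible (e : bexpr) : Prop :=
  (forall x y, 0 < x -> 0 < y ->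
     exists v, eval e x y = Some v /\ 0 <= v <= 1) /\
  (forall x, 0 < x -> eval e x x = Some (1/2)) /\
  (forall y, 0 < y -> filterlim (fun x => evalR e x y) (at_right 0) (locally 0)) /\
  (forall x, 0 < x -> filterlim (fun y => evalR e x y) (at_right 0) (locally 1)) /\
  (forall y, 0 < y -> filterlim (fun x => evalR e x y) (Rbar_locally p_infty) (locally 1)) /\
  (forall x, 0 < x -> filterlim (fun y => evalR e x y) (Rbar_locally p_infty) (locally 0)).

Definition bt_expr : bexpr := Dvd VarI (Add VarI VarJ).

(* Main.v *)
Require Import Defs.
From Stdlib Require Import Reals Lra Lia Psatz.
From Coquelicot Require Import Coquelicot.
Open Scope R_scope.

Lemma lim_fact (e : bexpr) : filterlim (fun x => evalR e x 1) (at_right 0) (locally 0) ->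
  exists t, 0 < t < 1 /\ Rabs (evalR e t 1) < 1/4.
Proof.
  intros H. apply filterlim_locally with (eps := mkposreal (1/4) ltac:(lra)) in H.
  destruct H as [d Hd]. simpl in Hd.
  exists (Rmin (d/2) (1/2)).
  assert (0 < d) by apply cond_pos.
  assert (0 < Rmin (d/2) (1/2)) by (apply Rmin_pos; lra).
  assert (Rmin (d/2) (1/2) <= 1/2) by apply Rmin_r.
  assert (Rmin (d/2) (1/2) <= d/2) by apply Rmin_l.
  split; [lra|].
  specialize (Hd (Rmin (d/2) (1/2))).
  unfold ball in Hd; simpl in Hd; unfold AbsRing_ball, abs, minus, plus, opp in Hd; simpl in Hd.
  assert (HH := Hd ltac:(rewrite ?Rplus_0_r, ?Ropp_0, ?Rplus_0_r, Rabs_pos_eq; lra) H0).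
  rewrite ?Ropp_0, ?Rplus_0_r in HH. exact HH.
Qed.

Definition Facts (e : bexpr) (t : R) : Prop :=
  eval e 1 1 = Some (1/2) /\ eval e 2 2 = Some (1/2) /\ eval e 3 3 = Some (1/2) /\
  (exists v, eval e 3 1 = Some v /\ 0 <= v <= 1) /\
  (exists v, eval e 1 3 = Some v /\ 0 <= v <= 1) /\
  (exists v, eval e t 1 = Some v /\ v < 1/4).

Lemma adm_facts e : admissible e -> exists t, 0 < t < 1 /\ Facts e t.
Proof.
  intros (H1 & H2 & H3 & _).
  destruct (lim_fact e (H3 1 ltac:(lra))) as (t & Ht & Hl).
  exists t; split; [exact Ht|].
  repeat split; try (apply H2; lra).
  - destruct (H1 3 1) as (v & Hv & Hb); try lra. eauto.
  - destruct (H1 1 3) as (v & Hv & Hb); try lra. eauto.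
  - destruct (H1 t 1) as (v & Hv & Hb); try lra. exists v; split; auto.
    unfold evalR in Hl; rewrite Hv in Hl. apply Rabs_def2 in Hl; lra.
Qed.

Ltac expand Hc :=
  repeat match goal with
  | e : bexpr |- _ => destruct e; simpl in Hc; try lia
  end.

Ltac crunch :=
  repeat match goal with
  | H : context [Req_EM_T ?a ?b] |- _ => destruct (Req_EM_T a b)
  | H : None = Some _ |- _ => discriminate H
  | H : Some _ = Some _ |- _ => injection H; clear H; intro
  | H : exists _, _ |- _ => destruct H
  | H : _ /\ _ |- _ => destruct H
  end.

Ltac numeral t := match t with
  | IZR _ => idtac | R0 => idtac | R1 => idtac
  | ?a + ?b => numeral a; numeral b
  | ?a * ?b => numeral a; numeral b
  | ?a - ?b => numeral a; numeral b
  | / ?a => numeral a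
  end.

Ltac invs :=
  unfold Rdiv in *;
  repeat match goal with
  | H : ?a * ?b <> 0 |- _ => apply Rmult_neq_0_reg in H; destruct H
  end;
  repeat (rewrite ?Rinv_mult, ?Rinv_inv in * );
  repeat match goal with
  | H : ?t <> 0 |- _ =>
      tryif numeral t then first [ exfalso; apply H; ring | clear H ] else
      match goal with
      | H' : context [/ t] |- _ =>
        let i := fresh "i" in
        let Hi := fresh "Hi" in
        assert (Hi : t * / t = 1) by (field; exact H);
        set (i := / t) in *; clearbody i
      end
  end.

Lemma canc n v : n <> 0 -> n * v * / n = v.
Proof. intros; field; auto. Qed.

Ltac numsimp :=
  repeat (rewrite ?Rinv_1, ?Rmult_1_l, ?Rmult_1_r in * );
  repeat match goal with
  | H : context [?n * ?v * / ?n] |- _ => rewrite (canc n v) in H by lra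
  end;
  repeat match goal with
  | H : ?v = ?c |- _ => is_var v; numeral c; subst v
  | H : ?c = ?v |- _ => is_var v; numeral c; subst v
  end.

Ltac enrich :=
  repeat match goal with
  | Hi : ?t * ?i = 1, H : ?a * ?i = ?b |- _ =>
      let H2 := fresh "E" in
      assert (H2 : a = b * t) by (transitivity (a * (t * i)); [rewrite Hi; ring | rewrite <- H; ring]);
      clear H
  end.

Ltac kill := crunch; invs; numsimp; first [ lra | nra | enrich; nra ].

Lemma part1 : forall e, (opcount e <= 1)%nat -> ~ admissible e.
Proof.
  intros e Hc Ha. destruct (adm_facts e Ha) as (t & Ht & HF). clear Ha.
  unfold Facts in HF.
  expand Hc; simpl in HF; kill.
Qed.

Lemma part2 : forall e : bexpr, opcount e = 2%nat -> admissible e ->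
     forall x y, 0 < x -> 0 < y -> eval e x y = Some (x / (x + y)).
Proof.
  intros e Hc Ha x y Hx Hy. destruct (adm_facts e Ha) as (t & Ht & HF). clear Ha.
  unfold Facts in HF.
  expand Hc; simpl in HF; simpl;
  first [ exfalso; kill
        | repeat (destruct (Req_EM_T _ _); [lra|]); f_equal; try rewrite (Rplus_comm y x); reflexivity ].
Qed.

Lemma bt_eval x y : 0 < x -> 0 < y -> eval bt_expr x y = Some (x / (x + y)).
Proof.
  intros. simpl. destruct (Req_EM_T (x + y) 0); [lra | reflexivity].
Qed.

Lemma right_lim (g : R -> R) (h : R -> R) l : g 0 = l ->
  (forall u, 0 < u -> h u = g u) -> continuous g 0 -> filterlim h (at_right 0) (locally l).
Proof.
  intros <- Hext Hc.
  apply filterlim_ext_loc with g.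
  - exists (mkposreal 1 Rlt_0_1). intros u _ Hu. symmetry; apply Hext; exact Hu.
  - eapply filterlim_filter_le_1; [apply filter_le_within|]. exact Hc.
Qed.

Lemma inf_lim (h : R -> R) (c : R) :
  (forall u, 0 < u -> h u = c - c / (u + 1) * 0 + 0) -> True.
Proof. auto. Qed.

Lemma inv_inf (y : R) : filterlim (fun u => / (u + y)) (Rbar_locally p_infty) (locally 0).
Proof.
  assert (H : is_lim (fun u => / (u + y)) p_infty (Rbar_inv p_infty)).
  { apply is_lim_inv.
    - eapply is_lim_plus. apply is_lim_id. apply is_lim_const. reflexivity.
    - simpl; discriminate. }
  exact H.
Qed.

Lemma cont_at (g : R -> R) l : g 0 = l -> continuous g 0 -> filterlim g (locally 0) (locally l).
Proof. intros <- H; exact H. Qed.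

Lemma bt_adm : admissible bt_expr.
Proof.
  repeat split.
  - intros x y Hx Hy. exists (x / (x + y)). rewrite bt_eval by auto.
    split; [reflexivity|]. split.
    + apply Rmult_le_pos; [lra|]. left; apply Rinv_0_lt_compat; lra.
    + apply Rmult_le_reg_r with (x + y); [lra|].
      unfold Rdiv; rewrite Rmult_assoc, Rinv_l by lra. lra.
  - intros x Hx. simpl. destruct (Req_EM_T (x + x) 0); [lra|]. f_equal. field. lra.
  - intros y Hy.
    apply (right_lim (fun u => u / (u + y))). unfold Rdiv; ring.
    + intros u Hu. unfold evalR. rewrite bt_eval by auto. reflexivity.
    + apply (@ex_derive_continuous R_AbsRing R_NormedModule). auto_derive. lra.
  - intros x Hx.
    apply (right_lim (fun u => x / (x + u))). field; lra.
    + intros u Hu. unfold evalR. rewrite bt_eval by auto. reflexivity.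
    + apply (@ex_derive_continuous R_AbsRing R_NormedModule). auto_derive. lra.
  - intros y Hy.
    eapply (filterlim_ext_loc (fun u => 1 - y * / (u + y))).
    + exists 0. intros u Hu. unfold evalR. rewrite bt_eval by lra. field. lra.
    + apply (filterlim_comp R R R (fun u => / (u + y)) (fun v => 1 - y * v) _ (locally 0) _); [apply inv_inf|].
      apply (cont_at (fun v => 1 - y * v)); [ring|].
      apply (@ex_derive_continuous R_AbsRing R_NormedModule (fun v => 1 - y * v)). auto_derive. auto.
  - intros x Hx.
    eapply (filterlim_ext_loc (fun u => x * / (u + x))).
    + exists 0. intros u Hu. unfold evalR. rewrite bt_eval by lra. unfold Rdiv. rewrite (Rplus_comm u x). reflexivity.
    + apply (filterlim_comp R R R (fun u => / (u + x)) (fun v => x * v) _ (locally 0) _); [apply inv_inf|].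
      apply (cont_at (fun v => x * v)); [ring|].
      apply (@ex_derive_continuous R_AbsRing R_NormedModule (fun v => x * v)). auto_derive. auto.
Qed.

Theorem mainTheorem1 :
  (forall e : bexpr, (opcount e <= 1)%nat -> ~ admissible e) /\
  (forall e : bexpr, opcount e = 2%nat -> admissible e ->
     forall x y, 0 < x -> 0 < y -> eval e x y = Some (x / (x + y))) /\
  opcount bt_expr = 2%nat /\ admissible bt_expr.
Proof.
  split; [exact part1|]. split; [exact part2|]. split; [reflexivity|exact bt_adm].
Qed.
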